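(* Every fragile graph $G$ of girth at least $4$ with $|V(G)|\geq 3$ satisfies $|E(G)|\leq 2|V(G)|-4$. Consequently every non-null fragile graph of girth at least $4$ has a vertex of degree at most $3$ and is $4$-colourable.
   Context: All graphs are finite and simple. A graph is $k$-connected if it has at least $k+1$ vertices and no vertex cutset with at most $k-1$ vertices. A graph is fragile if it has no $3$-connected subgraph. The girth of a graph is the length of its shortest cycle (infinite if the graph is acyclic). *)

(* Defs.v *)
From mathcomp Require Import all_boot.
Set Implicit Arguments. Unset Strict Implicit. Unset Printing Implicit Defensive.

Definition simple_graph (T : finType) (e : rel T) : Prop :=
  symmetric e /\ irreflexive e.

Definition edges (T : finType) (e : rel T) : {set {set T}} :=
  [set E : {set T} | [exists x, exists y, (E == [set x; y]) && e x y]].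

Definition degree (T : finType) (e : rel T) (x : T) : nat := #|[set y | e x y]|.

Definition subgraph (T : finType) (e : rel T) (S : {set T}) (f : rel T) : Prop :=
  symmetric f /\ forall x y, f x y -> [&& e x y, x \in S & y \in S].

Definition connected_on (T : finType) (f : rel T) (A : {set T}) : Prop :=
  forall u v, u \in A -> v \in A ->
    connect [rel x y | [&& f x y, x \in A & y \in A]] u v.

Definition k_connected (T : finType) (S : {set T}) (f : rel T) (k : nat) : Prop :=
  k.+1 <= #|S| /\
  forall X : {set T}, X \subset S -> #|X| <= k.-1 -> connected_on f (S :\: X).

Definition fragile (T : finType) (e : rel T) : Prop :=
  forall (S : {set T}) (f : rel T), subgraph e S f -> ~ k_connected S f 3.

Definition girth_ge (T : finType) (e : rel T) (g : nat) : Prop :=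
  forall c : seq T, uniq c -> 3 <= size c -> cycle e c -> g <= size c.

Definition colourable (T : finType) (e : rel T) (k : nat) : Prop :=
  exists c : T -> 'I_k, forall x y, e x y -> c x != c y.

(* Main.v *)
Require Import Defs.
From mathcomp Require Import all_boot.
From mathcomp Require Import zify.
From Stdlib Require Import Classical.
Set Implicit Arguments. Unset Strict Implicit. Unset Printing Implicit Defensive.

Definition DA (T : finType) (e : rel T) (A : {set T}) : {set T * T} :=
  [set p | [&& e p.1 p.2, p.1 \in A & p.2 \in A]].

Lemma DA_small1 (T : finType) (e : rel T) (A : {set T}) :
  irreflexive e -> #|A| <= 1 -> #|DA e A| = 0.
Proof.
move=> irr /card_le1_eqP H; apply/eqP; rewrite cards_eq0; apply/eqP/setP=> [[x y]].
rewrite !inE /=; apply/negbTE; apply/negP => /and3P [exy xA yA].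
by move: exy; rewrite (H _ _ xA yA) irr.
Qed.

Lemma DA_small2 (T : finType) (e : rel T) (A : {set T}) :
  irreflexive e -> #|A| = 2 -> #|DA e A| <= 2.
Proof.
move=> irr /eqP/cards2P [a [b [ab ->]]].
apply: leq_trans (_ : #|[set (a, b); (b, a)]| <= 2); last by rewrite cards2; case: (_ != _).
apply: subset_leq_card; apply/subsetP => [[x y]]; rewrite !inE /=.
case/and3P=> exy /orP[] /eqP xe /orP[] /eqP ye; subst x y; rewrite ?eqxx ?orbT //.
- by rewrite irr in exy.
- by rewrite irr in exy.
Qed.

Lemma DA_split (T : finType) (e : rel T) (A X C : {set T}) :
  symmetric e -> C \subset A :\: X ->
  (forall x y, x \in C -> y \in A -> y \notin X -> e x y -> y \in C) ->
  #|DA e A| <= #|DA e (C :|: X)| + #|DA e (A :\: C)|.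
Proof.
move=> sym sC cl.
apply: leq_trans (leq_card_setU _ _); apply: subset_leq_card.
apply/subsetP => [[x y]]; rewrite !inE /= => /and3P [exy xA yA].
rewrite exy xA yA /= !andbT.
case xC: (x \in C); case yC: (y \in C) => //=.
- case yX: (y \in X) => //.
  by move: yC; rewrite (cl x y) // yX.
- case xX: (x \in X); rewrite ?orbT //.
  by move: xC; rewrite (cl y x) // ?xX // sym.
by rewrite orbT.
Qed.

Lemma tri (T : finType) (e : rel T) (A : {set T}) (u v w : T) :
  simple_graph e -> #|A| = 3 -> u \in A -> v \in A -> w \in A ->
  u != v -> u != w -> v != w -> ~~ e u v -> #|DA e A| <= 4.
Proof.
move=> [sym irr] A3 uA vA wA uv uw vw nuv.
have EA : A = [set u; v; w].
  apply/esym/eqP; rewrite eqEcard; apply/andP; split.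
    by apply/subsetP => z; rewrite !inE => /orP[/orP[]|] /eqP->.
  rewrite A3 -setUA cardsU1 cards2 vw !inE negb_or uv uw.
  done.
have := DA_split (X := [set w]) (C := [set u]) sym _ _.
move=> /(_ A) H.
apply: leq_trans (H _ _) _.
- by rewrite sub1set !inE uw uA.
- move=> x y; rewrite EA !inE => /eqP -> /orP[/orP[]|] /eqP -> //.
  + by rewrite (negbTE nuv).
  + by rewrite eqxx.
- have h1 : #|DA e ([set u] :|: [set w])| <= 2.
    by apply: DA_small2 => //; rewrite cards2 uw.
  have h2 : #|DA e (A :\: [set u])| <= 2.
    apply: DA_small2 => //; move: (cardsD1 u A); rewrite uA A3 /=.
    lia.
  lia.
Qed.

Lemma three_case (T : finType) (e : rel T) (A : {set T}) :
  simple_graph e -> girth_ge e 4 -> #|A| = 3 -> #|DA e A| <= 4.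
Proof.
move=> sg gir A3; have [sym irr] := sg.
have /card_gt0P [a aA] : 0 < #|A| by rewrite A3.
have : #|A :\ a| == 2 by move: (cardsD1 a A); rewrite aA A3 /=; lia.
move=> /cards2P [b [c [bc Ea]]].
have : b \in A :\ a by rewrite Ea !inE eqxx.
rewrite !inE => /andP [ba bA].
have : c \in A :\ a by rewrite Ea !inE eqxx orbT.
rewrite !inE => /andP [ca cA].
rewrite eq_sym in ba; rewrite eq_sym in ca.
case eab: (e a b); last by apply: (tri sg A3 aA bA cA) => //; rewrite eab.
case ebc: (e b c); last by apply: (tri sg A3 bA cA aA) => //; rewrite ?ebc // eq_sym.
case eca: (e c a); last by apply: (tri sg A3 cA aA bA) => //; rewrite ?eca // eq_sym.
have := gir [:: a; b; c]; rewrite /= !inE negb_or ba ca bc /= eab ebc eca.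
by move=> /(_ isT isT isT).
Qed.

Lemma main_bound (T : finType) (e : rel T) :
  simple_graph e -> fragile e -> girth_ge e 4 ->
  forall n (A : {set T}), #|A| <= n -> 3 <= #|A| -> #|DA e A| + 8 <= 4 * #|A|.
Proof.
move=> sg frag gir; have [sym irr] := sg.
elim=> [|n IH] A An A3; first by lia.
have facts : forall B : {set T}, #|B| < #|A| ->
   [/\ 3 <= #|B| -> #|DA e B| + 8 <= 4 * #|B|, #|B| = 2 -> #|DA e B| <= 2
     & #|B| <= 1 -> #|DA e B| = 0].
  move=> B BA; split.
  - by apply: IH; lia.
  - exact: DA_small2.
  - exact: DA_small1.
have [A3e|A4] := eqVneq #|A| 3.
  by have := three_case sg gir A3e; lia.
have {A3 A4} A4 : 4 <= #|A| by lia.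
pose f := [rel x y | [&& e x y, x \in A & y \in A]].
have sub : subgraph e A f.
  split; first by move=> x y /=; rewrite sym; case: (x \in A); case: (y \in A); rewrite ?andbF.
  by move=> x y.
have nk := frag A f sub.
have [X [XA [X2 nc]]] : exists X : {set T}, X \subset A /\ #|X| <= 2 /\ ~ connected_on f (A :\: X).
  apply: NNPP => H; apply: nk; split => // X XA X2.
  by apply: NNPP => Hc; apply: H; exists X.
have [u [v [uA [vA nuv]]]] : exists u v, u \in A :\: X /\ v \in A :\: X /\
   ~~ connect [rel x y | [&& f x y, x \in A :\: X & y \in A :\: X]] u v.
  apply: NNPP => H; apply: nc => u v uA vA; apply: NNPP => Hc; apply: H.
  by exists u, v; split => //; split => //; apply/negP.
set R := [rel x y | _] in nuv.
pose C := [set w in A :\: X | connect R u w].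
have CAX : C \subset A :\: X by apply/subsetP => w; rewrite inE => /andP[].
have cl : forall x y, x \in C -> y \in A -> y \notin X -> e x y -> y \in C.
  move=> x y; rewrite !inE => /andP [xAX cux] yA yX exy.
  rewrite yX yA /=; apply: connect_trans cux (connect1 _).
  rewrite /R /= exy yA !inE yX yA /=.
  by case/andP: xAX => -> ->.
have split := DA_split sym CAX cl.
have uC : u \in C by rewrite inE uA connect0.
have vC : v \notin C by rewrite inE (negbTE nuv) andbF.
have CX : C :&: X = set0.
  apply/setP => z; rewrite in_setI in_set0; apply/negbTE/negP => /andP[zC zX].
  by have := subsetP CAX z zC; rewrite !inE zX.
have s1 : #|C :|: X| = #|C| + #|X| by rewrite cardsU CX cards0; lia.
have s2 : #|A :&: C| + #|A :\: C| = #|A| by apply: cardsID.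
have s3 : A :&: C = C by apply/setIidPr/subsetP => z /(subsetP CAX); rewrite inE => /andP[].
rewrite s3 in s2.
have s4 : #|X| + 1 <= #|A :\: C|.
  have -> : #|X| + 1 = #|v |: X| by rewrite cardsU1; move: vA; rewrite inE => /andP[-> _]; lia.
  apply: subset_leq_card; apply/subsetP => z; rewrite in_setU1 in_setD => /orP[/eqP->|zX].
    by rewrite vC; move: vA; rewrite inE => /andP[].
  rewrite (subsetP XA) // andbT; apply/negP => zC.
  by have := subsetP CAX z zC; rewrite !inE zX.
have s5 : 1 <= #|C| by apply/card_gt0P; exists u.
have [a1 a2 a3] := facts (C :|: X) ltac:(lia).
have [b1 b2 b3] := facts (A :\: C) ltac:(lia).
have := split.
clear -s1 s2 s4 s5 a1 a2 a3 b1 b2 b3 X2 A4.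
lia.
Qed.

Lemma edges_DA (T : finType) (e : rel T) :
  symmetric e -> irreflexive e -> 2 * #|edges e| <= #|DA e setT|.
Proof.
move=> sym irr.
rewrite -[#|DA e setT|]sum1_card (@partition_big _ _ _ _ _ _ (fun p => p \in DA e setT) (fun p : T * T => [set p.1; p.2]) (fun E => E \in edges e)).
  rewrite mulnC -sum_nat_const; apply: leq_sum => E.
  rewrite inE => /existsP [x /existsP [y /andP [/eqP -> exy]]].
  rewrite sum1_card.
  have xy : x != y by apply/negP => /eqP xy; rewrite xy irr in exy.
  have <- : #|[set (x, y); (y, x)]| = 2.
    by rewrite cards2; case: eqP => // -[] /eqP; rewrite (negbTE xy).
  apply: subset_leq_card; apply/subsetP => p; rewrite !inE => /orP [] /eqP -> /=.
    by rewrite unfold_in /= !inE /= exy eqxx.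
  by rewrite unfold_in /= !inE /= sym exy setUC eqxx.
move=> [x y]; rewrite !inE /= => /andP [exy _].
by apply/existsP; exists x; apply/existsP; exists y; rewrite eqxx exy.
Qed.

Definition degA (T : finType) (e : rel T) (A : {set T}) x := #|[set y in A | e x y]|.

Lemma deg_sum (T : finType) (e : rel T) (A : {set T}) :
  \sum_(x in A) degA e A x = #|DA e A|.
Proof.
rewrite -[#|DA e A|]sum1_card (@partition_big _ _ _ _ _ _ (fun p => p \in DA e A) (fun p : T * T => p.1) (fun x => x \in A)).
  apply: eq_bigr => x xA; rewrite sum1_card /degA.
  rewrite -(card_imset _ (fun y1 y2 (h : (x, y1) = (x, y2)) => congr1 snd h)).
  apply: eq_card => [[a b]].
  rewrite -[RHS]/(((a, b) \in DA e A) && (a == x)) inE /=.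
  apply/imsetP/andP.
    move=> [b' ]; rewrite inE => /andP [bA eb] [-> ->].
    by rewrite eb xA bA eqxx.
  move=> [/and3P [eab aA bA] /eqP ax]; subst a; exists b => //.
  by rewrite inE bA eab.
  by move=> [x y]; rewrite !inE /= => /and3P [].
Qed.

Lemma low_deg (T : finType) (e : rel T) :
  simple_graph e -> fragile e -> girth_ge e 4 ->
  forall A : {set T}, 0 < #|A| -> exists2 x, x \in A & degA e A x <= 3.
Proof.
move=> sg frag gir A A0.
have [A2|A3] := leqP #|A| 2.
  have /card_gt0P [x xA] := A0; exists x => //.
  apply: leq_trans (_ : #|A| <= 3); last by lia.
  by apply: subset_leq_card; apply/subsetP => y; rewrite inE => /andP[].
have H := main_bound sg frag gir (leqnn #|A|) A3.
apply: NNPP => nx.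
have : \sum_(x in A) 4 <= \sum_(x in A) degA e A x.
  apply: leq_sum => x xA; rewrite leqNgt; apply/negP => lt; apply: nx.
  by exists x.
rewrite sum_nat_const deg_sum; lia.
Qed.

Lemma colour_ind (T : finType) (e : rel T) :
  simple_graph e -> fragile e -> girth_ge e 4 ->
  forall n (A : {set T}), #|A| <= n ->
  exists c : T -> 'I_4, forall x y, x \in A -> y \in A -> e x y -> c x != c y.
Proof.
move=> sg frag gir; have [sym irr] := sg.
elim=> [|n IH] A An.
  exists (fun _ => ord0) => x y xA; move: An; rewrite leqn0 cards_eq0 => /eqP A0.
  by rewrite A0 inE in xA.
have [A0|A0] := eqVneq #|A| 0.
  exists (fun _ => ord0) => y z yA; move: A0 => /eqP; rewrite cards_eq0 => /eqP A0.
  by rewrite A0 inE in yA.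
have [x xA dx] := low_deg sg frag gir (A := A) ltac:(lia).
have [c Hc] := IH (A :\ x) ltac:(move: (cardsD1 x A); rewrite xA /=; lia).
pose N := [set c y | y in [set y in A | e x y]].
have N3 : #|N| <= 3 by apply: leq_trans (leq_imset_card _ _) dx.
have /card_gt0P [col colN] : 0 < #|~: N|.
  by move: (cardsC N); rewrite card_ord; lia.
rewrite inE in colN.
exists (fun z => if z == x then col else c z) => y z yA zA eyz.
have Ny : forall w, w \in A -> e x w -> c w \in N.
  by move=> w wA ew; apply: imset_f; rewrite inE wA ew.
case: (eqVneq y x) => [yx|yx]; case: (eqVneq z x) => [zx|zx].
- by subst; rewrite irr in eyz.
- subst y; apply/eqP => h; move: colN; rewrite h Ny //.
- subst z; apply/eqP => h; move: colN; by rewrite -h Ny // sym.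
- by apply: Hc => //; rewrite !inE ?yx ?zx.
Qed.

Theorem mainTheorem5 :
  (forall (T : finType) (e : rel T), simple_graph e -> fragile e -> girth_ge e 4 ->
     3 <= #|T| -> #|edges e| <= 2 * #|T| - 4)
  /\
  (forall (T : finType) (e : rel T), simple_graph e -> fragile e -> girth_ge e 4 ->
     0 < #|T| -> (exists x : T, degree e x <= 3) /\ colourable e 4).
Proof.
split.
- move=> T e sg frag gir T3; have [sym irr] := sg.
  have H1 := edges_DA sym irr.
  have H2 := main_bound sg frag gir (leqnn #|[set: T]|).
  rewrite cardsT in H2; have := H2 T3; lia.
- move=> T e sg frag gir T0; split.
  + have [x _ dx] := low_deg sg frag gir (A := setT) ltac:(by rewrite cardsT).
    exists x; move: dx; rewrite /degA /degree.
    by rewrite (eq_card (B := [set y | e x y])) // => y; rewrite !inE.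
  + have [c Hc] := colour_ind sg frag gir (leqnn #|[set: T]|).
    by exists c => x y exy; apply: Hc; rewrite ?inE.
Qed.
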